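(* Let $\beta\in\mathbb{C}$ and $k\in\mathbb{Z}$ with $\beta\neq k$, and define $f:\mathbb{Z}\times\mathbb{Z}\to\mathbb{C}$ by $f(m,n)=n+k$ if $m+n+k\neq0$ and $f(-n-k,n)=\frac{(n+k)(\beta-n-k)}{\beta-k}$ (the structure constants of the left-symmetric algebra $V^{\beta,k}$ on the Witt algebra with basis $\{x_n\}$, $x_mx_n=f(m,n)x_{m+n}$). Then there is no function $\omega:\mathbb{Z}\times\mathbb{Z}\to\mathbb{C}$ satisfying, for all $m,n,l\in\mathbb{Z}$, $$\omega(m,n)-\omega(n,m)=\tfrac{1}{12}(n^3-n)\delta_{m+n,0},\qquad (n-m)\omega(m+n,l)=\omega(m,n+l)f(n,l)-\omega(n,m+l)f(m,l).$$
   Context: These conditions on $\omega$ are exactly the conditions for the product $\theta\theta=x_m\theta=\theta x_m=0$, $x_mx_n=f(m,n)x_{m+n}+\omega(m,n)\theta$ on $V^{\beta,k}\oplus\mathbb{C}\theta$ to be a left-symmetric algebra (i.e. $(xy)z-x(yz)=(yx)z-y(xz)$) whose commutator is the Virasoro bracket $[x_m,x_n]=(n-m)x_{m+n}+\delta_{m+n,0}\frac{n^3-n}{12}\theta$, $[\theta,x_n]=0$. *)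

(* Defs.v *)
From mathcomp Require Import all_boot all_order all_algebra.
Set Implicit Arguments. Unset Strict Implicit. Unset Printing Implicit Defensive.
Import Order.TTheory GRing.Theory Num.Theory.
Local Open Scope ring_scope.

Definition Vf (C : numClosedFieldType) (beta : C) (k : int) (m n : int) : C :=
  if m + n + k != 0 then (n + k)%:~R
  else ((n + k)%:~R * (beta - (n + k)%:~R)) / (beta - k%:~R).

Definition kdelta (C : numClosedFieldType) (a b : int) : C :=
  if a == b then 1 else 0.

(* Main.v *)
Require Import Defs.
From mathcomp Require Import all_boot all_order all_algebra.
From mathcomp Require Import ring.
Import Order.TTheory GRing.Theory Num.Theory.
Local Open Scope ring_scope.

Lemma VfG (C : numClosedFieldType) (beta : C) (k m l : int) :
  m + l + k != 0 -> Vf beta k m l = (l + k)%:~R.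
Proof. by rewrite /Vf => ->. Qed.

Lemma Vf0 (C : numClosedFieldType) (beta : C) (k l : int) :
  Vf beta k 0 l = (l + k)%:~R.
Proof.
rewrite /Vf add0r; case: (l + k =P 0) => [->|] //=.
by rewrite !mul0r.
Qed.

Theorem theorem4p2 (C : numClosedFieldType) (beta : C) (k : int)
  (hbk : beta != k%:~R) :
  ~ exists omega : int -> int -> C,
      (forall m n : int,
         omega m n - omega n m
         = 12%:R^-1 * ((n%:~R) ^+ 3 - n%:~R) * kdelta C (m + n) 0) /\
      (forall m n l : int,
         (n - m)%:~R * omega (m + n) l
         = omega m (n + l) * Vf beta k n l - omega n (m + l) * Vf beta k m l).
Proof.
move=> [w [A E]].
have h12 : (12%:R : C)^-1 != 0 by rewrite invr_eq0 pnatr_eq0.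
have A1 : w 1 (-1) - w (-1) 1 = 0.
  by rewrite A /kdelta (_ : (1 + -1 : int) = 0) // eqxx; ring.
have A2 : w 2 (-2) - w (-2) 2 = - (6%:R * 12%:R^-1).
  by rewrite A /kdelta (_ : (2 + -2 : int) = 0) // eqxx; ring.
case: (k =P 0) => [k0|kn0].
  subst k.
  have R1 := E 1 (-2) 1.
  have R2 := E (-1) 2 (-1).
  rewrite !VfG // in R1 R2.
  rewrite (_ : (1 + -2 : int) = -1) // (_ : (-2 + 1 : int) = -1) //
    (_ : (1 + 1 : int) = 2) // in R1.
  rewrite (_ : (-1 + 2 : int) = 1) // (_ : (2 + -1 : int) = 1) //
    (_ : (-1 + -1 : int) = -2) // in R2.
  have : 6%:R * (12%:R^-1 : C) = 0.
    move: R1 R2 A1 A2.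
    set a := w 1 (-1); set b := w (-1) 1; set c := w 2 (-2); set d := w (-2) 2.
    move=> R1 R2 A1 A2.
    have -> : 6%:R * (12%:R^-1 : C) =
      ((-2 - 1)%:~R * b - (a * (1 + 0)%:~R - d * (1 + 0)%:~R))
      + ((2 - -1)%:~R * a - (b * (-1 + 0)%:~R - c * (-1 + 0)%:~R))
      - 2%:R * (a - b) + (c - d - - (6%:R * 12%:R^-1)) by ring.
    by rewrite R1 R2 A1 A2; ring.
  by move/eqP; rewrite mulf_eq0 pnatr_eq0 (negPf h12).
have F n : n%:~R * w n (-n) = w 0 0 * (-n+k)%:~R - w n (-n) * (-n+k)%:~R.
  have v : Vf beta k n (-n) = (-n+k)%:~R.
    by rewrite VfG // subrr add0r; apply/eqP.
  by move: (E 0 n (-n)); rewrite subr0 add0r subrr sub0r Vf0 v; apply.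
have F1 := F 1; have F2 := F 2; have F3 := F (-1); have F4 := F (-2).
rewrite opprK in F3; rewrite opprK in F4.
have : k%:~R * (6%:R * (12%:R^-1 : C)) = 0.
  move: F1 F2 F3 F4 A1 A2.
  set a := w 1 (-1); set b := w (-1) 1; set c := w 2 (-2); set d := w (-2) 2.
  set h := w 0 0.
  move=> F1 F2 F3 F4 A1 A2.
  have -> : k%:~R * (6%:R * (12%:R^-1 : C)) =
    k%:~R * ((c - d) - - (6%:R * 12%:R^-1)) - 2%:R * k%:~R * (a - b)
    - ((2%:~R * c - (h * (-2 + k)%:~R - c * (-2 + k)%:~R))
       - ((-2)%:~R * d - (h * (2 + k)%:~R - d * (2 + k)%:~R))
       - 2%:R * (1%:~R * a - (h * (-1 + k)%:~R - a * (-1 + k)%:~R))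
       + 2%:R * ((-1)%:~R * b - (h * (1 + k)%:~R - b * (1 + k)%:~R))) by ring.
  by rewrite A1 A2 F1 F2 F3 F4; ring.
move/eqP; rewrite !mulf_eq0 pnatr_eq0 (negPf h12) intr_eq0 /=.
by rewrite orbF => /eqP.
Qed.
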